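(* Let $\mathit{Lin}_n,\mathit{Lout}_n,\mathit{Ain}_n,\mathit{Aout}_n$ be the solution of the data flow equations for a procedure $p$ computed by iteration starting from $\emptyset$ for every variable. Let $n$ be a node, $x\in\mathbf{P}$ and $z\in\mathbf{V}\setminus\{?\}$. If, along some execution path from $\mathrm{Start}_p$ reaching node $n$ (executing the pointer assignment statements with their usual meaning, pointers being undefined, i.e. holding $?$, at $\mathrm{Start}_p$), $x$ holds the address of $z$ on entry to $n$, then $x\in\mathit{Ref}_n$ implies $(x,z)\in\mathit{Ain}_n$.
   Context: $\mathbf{V}$ is a finite set of variables, $\mathbf{P}\subseteq\mathbf{V}$ the set of pointer variables, and $\mathbf{V}\setminus\mathbf{P}$ contains a special element $?$ (undefined location). A procedure $p$ is a control flow graph whose nodes are statements, with unique entry node $\mathrm{Start}_p$ (no predecessors) and unique exit node $\mathrm{End}_p$ (no successors), every node reachable from $\mathrm{Start}_p$ and $\mathrm{End}_p$ reachable from every node; $\mathit{succ}(n)$, $\mathit{pred}(n)$ denote successors/predecessors. Every node is of one of the forms: ''use $x$'', ''$x=\&a$'', ''$x=y$'', ''$x=*y$'', ''$*x=y$'', or ''other'', where $x,y\in\mathbf{P}$, $a\in\mathbf{V}$. Relation notation for $R\subseteq\mathbf{P}\times\mathbf{V}$ and a set $X$: $R\,X=\{v\mid u\in X,\ (u,v)\in R\}$; $R|_X=\{(u,v)\in R\mid u\in X\}$; $R^2=\{(u,w)\mid (u,v)\in R,\ (v,w)\in R\}$. $\mathit{Must}(R)=\bigcup_{x\in\mathbf{P}}\{x\}\times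 M_x$, where $M_x=\mathbf{V}$ if $R|_{\{x\}}=\emptyset$ or $R|_{\{x\}}=\{(x,?)\}$; $M_x=\{y\}$ if $R|_{\{x\}}=\{(x,y)\}$ with $y\neq ?$; and $M_x=\emptyset$ otherwise. Extractor functions of node $n$ (with $A=\mathit{Ain}_n$): - use $x$: $\mathit{Def}_n=\emptyset$, $\mathit{Kill}_n=\emptyset$, $\mathit{Ref}_n=\{x\}$, $\mathit{Pointee}_n=\emptyset$. - $x=\&a$: $\mathit{Def}_n=\{x\}$, $\mathit{Kill}_n=\{x\}$, $\mathit{Ref}_n=\emptyset$, $\mathit{Pointee}_n=\{a\}$. - $x=y$: $\mathit{Def}_n=\{x\}$, $\mathit{Kill}_n=\{x\}$, $\mathit{Ref}_n=\{y\}$ if $\mathit{Def}_n\cap\mathit{Lout}_n\neq\emptyset$ and $\emptyset$ otherwise, $\mathit{Pointee}_n=A\{y\}$. - $x=*y$: $\mathit{Def}_n=\{x\}$, $\mathit{Kill}_n=\{x\}$, $\mathit{Ref}_n=\{y\}\cup((A\{y\})\cap\mathbf{P})$ if $\mathit{Def}_n\cap\mathit{Lout}_n\neq\emptyset$ and $\emptyset$ otherwise, $\mathit{Pointee}_n=A^2\{y\}$. - $*x=y$: $\mathit{Def}_n=(A\{x\})\cap\mathbf{P}$, $\mathit{Kill}_n=(\mathit{Must}(A)\{x\})\cap\mathbf{P}$, $\mathit{Ref}_n=\{x,y\}$ if $\mathit{Def}_n\cap\mathit{Lout}_n\neq\emptyset$ and $\{x\}$ otherwise, $\mathit{Pointee}_n=A\{y\}$.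 - other: all four are $\emptyset$. Data flow equations: $\mathit{Lout}_n=\emptyset$ if $n=\mathrm{End}_p$, else $\bigcup_{s\in\mathit{succ}(n)}\mathit{Lin}_s$; $\mathit{Lin}_n=(\mathit{Lout}_n-\mathit{Kill}_n)\cup\mathit{Ref}_n$; $\mathit{Ain}_n=\mathit{Lin}_n\times\{?\}$ if $n=\mathrm{Start}_p$, else $\big(\bigcup_{m\in\mathit{pred}(n)}\mathit{Aout}_m\big)|_{\mathit{Lin}_n}$; $\mathit{Aout}_n=\big((\mathit{Ain}_n-(\mathit{Kill}_n\times\mathbf{V}))\cup(\mathit{Def}_n\times\mathit{Pointee}_n)\big)|_{\mathit{Lout}_n}$. The solution is the greatest fixed point with respect to the data-flow order in which $\sqsubseteq$ is $\supseteq$ (top element $\emptyset$). *)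

(* Defs.v *)
From HB Require Import structures.
From mathcomp Require Import all_boot.
Set Implicit Arguments. Unset Strict Implicit. Unset Printing Implicit Defensive.

Inductive stmt (V : Type) :=
| SUse   (x : V)
| SAddr  (x a : V)      (* x = &a  *)
| SCopy  (x y : V)      (* x = y   *)
| SLoad  (x y : V)      (* x = *y  *)
| SStore (x y : V)      (* *x = y  *)
| SOther.
Arguments SOther {V}.

Section DFA.
Variables (V : finType) (P : {set V}) (undef : V).

Definition img (R : {set V * V}) (X : {set V}) : {set V} :=
  [set v | [exists u in X, (u, v) \in R]].
Definition restr (R : {set V * V}) (X : {set V}) : {set V * V} :=
  [set p in R | p.1 \in X].

Definition Mset (R : {set V * V}) (x : V) : {set V} :=
  let Rx := restr R [set x] in
  if (Rx == set0) || (Rx == [set (x, undef)]) then setT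
  else if [exists y, (y != undef) && (Rx == [set (x, y)])] then img R [set x]
  else set0.

Definition Must (R : {set V * V}) : {set V * V} :=
  [set p | (p.1 \in P) && (p.2 \in Mset R p.1)].

Definition Def (s : stmt V) (A : {set V * V}) : {set V} :=
  match s with
  | SAddr x _ | SCopy x _ | SLoad x _ => [set x]
  | SStore x _ => img A [set x] :&: P
  | _ => set0
  end.

Definition Kill (s : stmt V) (A : {set V * V}) : {set V} :=
  match s with
  | SAddr x _ | SCopy x _ | SLoad x _ => [set x]
  | SStore x _ => img (Must A) [set x] :&: P
  | _ => set0
  end.

Definition Ref (s : stmt V) (A : {set V * V}) (Lo : {set V}) : {set V} :=
  match s with
  | SUse x => [set x]
  | SAddr _ _ => set0
  | SCopy x y => if Def s A :&: Lo != set0 then [set y] else set0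
  | SLoad x y => if Def s A :&: Lo != set0 then [set y] :|: (img A [set y] :&: P)
                 else set0
  | SStore x y => if Def s A :&: Lo != set0 then [set x; y] else [set x]
  | SOther => set0
  end.

Definition Pointee (s : stmt V) (A : {set V * V}) : {set V} :=
  match s with
  | SAddr _ a => [set a]
  | SCopy _ y => img A [set y]
  | SLoad _ y => img A (img A [set y])
  | SStore _ y => img A [set y]
  | _ => set0
  end.

Variables (N : finType) (start endn : N) (succ : N -> {set N}) (lab : N -> stmt V).

Definition predn (n : N) : {set N} := [set m | n \in succ m].

Record sol := Sol {
  Lin  : {ffun N -> {set V}};
  Lout : {ffun N -> {set V}};
  Ain  : {ffun N -> {set V * V}};
  Aout : {ffun N -> {set V * V}} }.

Definition sol0 : sol := Sol [ffun=> set0] [ffun=> set0] [ffun=> set0] [ffun=> set0].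

(* One (simultaneous, Jacobi-style) round of evaluating all data flow equations. *)
Definition step (S : sol) : sol :=
  Sol
    [ffun n => (Lout S n :\: Kill (lab n) (Ain S n)) :|: Ref (lab n) (Ain S n) (Lout S n)]
    [ffun n => if n == endn then set0 else \bigcup_(s in succ n) Lin S s]
    [ffun n => if n == start then setX (Lin S n) [set undef]
               else restr (\bigcup_(m in predn n) Aout S m) (Lin S n)]
    [ffun n => restr ((Ain S n :\: setX (Kill (lab n) (Ain S n)) setT)
                       :|: setX (Def (lab n) (Ain S n)) (Pointee (lab n) (Ain S n)))
                     (Lout S n)].

Definition stmt_ok (s : stmt V) : bool :=
  match s with
  | SUse x => x \in P
  | SAddr x _ => x \in P
  | SCopy x y | SLoad x y | SStore x y => (x \in P) && (y \in P)
  | SOther => true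
  end.

Definition edge : rel N := fun a b => b \in succ a.

Definition wf_proc : Prop :=
  undef \notin P /\
  [/\ (forall m, start \notin succ m),
      succ endn = set0,
      (forall n, connect edge start n),
      (forall n, connect edge n endn)
    & (forall n, stmt_ok (lab n))].

(* Concrete semantics: a state gives the value (an address, i.e. a variable,
   or [undef]) held by each variable; only pointer variables are ever written. *)
Definition upd (sg : V -> V) (x v : V) : V -> V :=
  fun w => if w == x then v else sg w.

(* None = execution is stuck (dereference of an undefined pointer). *)
Definition exec (s : stmt V) (sg : V -> V) : option (V -> V) :=
  match s with
  | SAddr x a => Some (upd sg x a)
  | SCopy x y => Some (upd sg x (sg y))
  | SLoad x y => if sg y == undef then None
                 else Some (upd sg x (if sg y \in P then sg (sg y) else undef))
  | SStore x y => if sg x == undef then None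
                  else if sg x \in P then Some (upd sg (sg x) (sg y)) else Some sg
  | _ => Some sg
  end.

Inductive reaches : N -> (V -> V) -> Prop :=
| reaches_start : reaches start (fun _ => undef)
| reaches_step m n sg sg' :
    reaches m sg -> n \in succ m -> exec (lab m) sg = Some sg' -> reaches n sg'.

End DFA.

(* Main.v *)
Require Import Defs.
From mathcomp Require Import all_boot.

Lemma inv (V : finType) (P : {set V}) (undef : V)
    (N : finType) (start endn : N) (succ : N -> {set N}) (lab : N -> stmt V)
    (S : sol V N) :
  (forall m, start \notin succ m) -> succ endn = set0 ->
  step P undef start endn succ lab S = S ->
  forall n sg, reaches P undef start succ lab n sg ->
  forall x, x \in Lin S n -> sg x != undef -> (x, sg x) \in Ain S n.
Proof.
move=> Hst Hend Hfix.
have HLin n : Lin S n = (Lout S n :\: Kill P undef (lab n) (Ain S n)) :|: Ref P (lab n) (Ain S n) (Lout S n)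
  by rewrite -{1}Hfix /= ffunE.
have HLout n : Lout S n = if n == endn then set0 else \bigcup_(s in succ n) Lin S s
  by rewrite -{1}Hfix /= ffunE.
have HAin n : Ain S n = if n == start then setX (Lin S n) [set undef]
               else restr (\bigcup_(m in Defs.predn succ n) Aout S m) (Lin S n)
  by rewrite -{1}Hfix /= ffunE.
have HAout n : Aout S n = restr ((Ain S n :\: setX (Kill P undef (lab n) (Ain S n)) setT)
                       :|: setX (Def P (lab n) (Ain S n)) (Pointee (lab n) (Ain S n)))
                     (Lout S n)
  by rewrite -{1}Hfix /= ffunE.
move=> n sg; elim => [|m n0 sg0 sg1 Hr IH Hsucc Hex] x.
  by move=> _ /=; rewrite eqxx.
have n0ns : n0 != start by apply: contraNneq (Hst m) => <-.
have mne : m != endn by apply: contraTneq Hsucc => ->; rewrite Hend inE.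
move=> Hx Hne.
rewrite HAin (negbTE n0ns) in_set /= Hx andbT.
apply/bigcupP; exists m; first by rewrite in_set.
have HxL : x \in Lout S m by rewrite HLout (negbTE mne); apply/bigcupP; exists n0.
rewrite HAout in_set /= HxL andbT.
have HRef y : y \in Ref P (lab m) (Ain S m) (Lout S m) -> y \in Lin S m
  by move=> H; rewrite HLin in_setU H orbT.
have HK y : y \in Lout S m -> y \notin Kill P undef (lab m) (Ain S m) -> y \in Lin S m
  by move=> H1 H2; rewrite HLin in_setU in_setD H1 H2.
move: HRef HK IH Hex Hne HxL.
case: (lab m) => [u|y a|y w|y w|y w|] /= HRef HK IH.
- case=> <- Hne HxL. by rewrite !inE /= IH // HK // inE.
- case=> <- Hne HxL; rewrite /upd in Hne *; case: (eqVneq x y) Hne => [->|nxy] Hne.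
    by rewrite !inE !eqxx orbT.
  by rewrite !inE (negbTE nxy) /= IH // HK // inE.
- case=> <- Hne HxL; rewrite /upd in Hne *; case: (eqVneq x y) Hne => [Exy|nxy] Hne.
    subst x. rewrite in_setU in_setX in_set1 eqxx /= in_set; apply/orP; right.
    rewrite /img inE; apply/existsP; exists w; rewrite in_set1 eqxx /=; apply: IH => //; apply: HRef.
    suff -> : [set y] :&: Lout S m != set0 by rewrite inE.
    by apply/set0Pn; exists y; rewrite !inE eqxx.
  by rewrite !inE (negbTE nxy) /= IH // HK // inE.
- case: (eqVneq (sg0 w) undef) => // Hw; case=> <- Hne HxL; rewrite /upd in Hne *; case: (eqVneq x y) Hne => [Exy|nxy] Hne.
    subst x. have HD : [set y] :&: Lout S m != set0.
      by apply/set0Pn; exists y; rewrite !inE eqxx.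
    rewrite HD in HRef.
    case: ifP Hne => [HP|]; last by rewrite eqxx.
    move=> Hne.
    have H1 : (w, sg0 w) \in Ain S m.
      by apply: IH => //; apply: HRef; rewrite !inE eqxx.
    have H2 : (sg0 w, sg0 (sg0 w)) \in Ain S m.
      apply: IH => //; apply: HRef; rewrite in_setU in_setI HP andbT /img inE; apply/orP; right.
      rewrite in_set; apply/existsP; exists w; by rewrite in_set1 eqxx H1.
    rewrite in_setU in_setX in_set1 eqxx /=; apply/orP; right.
    rewrite /img inE; apply/existsP; exists (sg0 w); rewrite H2 andbT inE.
    by apply/existsP; exists w; rewrite in_set1 eqxx.
  by rewrite !inE (negbTE nxy) /= IH // HK // inE.
- case: (eqVneq (sg0 y) undef) => // Hy.
  have Hyin : y \in Lin S m by apply: HRef; case: ifP => _; rewrite !inE eqxx.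
  have Hya := IH y Hyin Hy.
  have Key v : v \in img (Must P undef (Ain S m)) [set y] -> v = sg0 y.
    rewrite in_set => /existsP [u /andP [/set1P -> Hm]].
    move: Hm; rewrite in_set /= => /andP [_].
    rewrite /Mset.
    have Hr0 : (y, sg0 y) \in restr (Ain S m) [set y] by rewrite in_set Hya /= in_set1 eqxx.
    have -> : (restr (Ain S m) [set y] == set0) = false.
      by apply/negbTE/set0Pn; exists (y, sg0 y).
    have -> : (restr (Ain S m) [set y] == [set (y, undef)]) = false.
      apply/negbTE; apply: contra_neq Hy => E; move: Hr0; rewrite E => /set1P.
      by case.
    case: ifP; last by rewrite inE.
    move=> /existsP [y' /andP [_ /eqP E]].
    rewrite in_set => /existsP [u' /andP [/set1P -> Hv]].
    have Hr' : (y, v) \in restr (Ain S m) [set y] by rewrite in_set Hv /= in_set1 eqxx.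
    move: Hr0 Hr'; rewrite E => /set1P [->] /set1P [->] //.
  have HKill : x \in img (Must P undef (Ain S m)) [set y] :&: P -> x = sg0 y.
    by rewrite in_setI => /andP [/Key].
  case: ifP => HP; case=> <- Hne HxL.
    rewrite /upd in Hne *; case: (eqVneq x (sg0 y)) Hne => [Exy|nxy] Hne.
      have HD : (img (Ain S m) [set y] :&: P) :&: Lout S m != set0.
        apply/set0Pn; exists x; rewrite !in_setI HxL Exy HP andbT in_set.
        rewrite andbT; by apply/existsP; exists y; rewrite in_set1 eqxx Hya.
      rewrite HD in HRef.
      have Hw : (w, sg0 w) \in Ain S m by apply: IH => //; apply: HRef; rewrite !inE eqxx orbT.
      rewrite in_setU in_setX; apply/orP; right; rewrite !in_set Exy HP andbT.
      apply/andP; split; apply/existsP.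
        by exists y; rewrite in_set1 eqxx Hya.
      by exists w; rewrite in_set1 eqxx Hw.
    have nK : x \notin img (Must P undef (Ain S m)) [set y] :&: P.
      by apply/negP => /HKill /eqP; rewrite (negbTE nxy).
    by rewrite in_setU in_setD in_setX /= (negbTE nK) /= IH // HK.
  have nK : x \notin img (Must P undef (Ain S m)) [set y] :&: P.
    apply/negP => H; move: (H); rewrite in_setI => /andP [_].
    by rewrite (HKill H) HP.
  by rewrite in_setU in_setD in_setX /= (negbTE nK) /= IH // HK.
- case=> <- Hne HxL. by rewrite !inE /= IH // HK // inE.
Qed.

Theorem theorem3 (V : finType) (P : {set V}) (undef : V)
    (N : finType) (start endn : N) (succ : N -> {set N}) (lab : N -> stmt V)
    (S : sol V N) (k : nat) :
  wf_proc P undef start endn succ lab ->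
  S = iter k (step P undef start endn succ lab) (sol0 V N) ->
  step P undef start endn succ lab S = S ->
  forall (n : N) (x z : V) (sg : V -> V),
    x \in P -> z != undef ->
    reaches P undef start succ lab n sg ->
    sg x = z ->
    x \in Ref P (lab n) (Ain S n) (Lout S n) ->
    (x, z) \in Ain S n.
Proof.
move=> [_ [Hst Hend _ _ _]] _ Hfix n x z sg _ Hz Hr Hx HR.
have := @inv V P undef N start endn succ lab S Hst Hend Hfix n sg Hr x.
rewrite Hx; apply.
  have HLin : Lin S n = (Lout S n :\: Kill P undef (lab n) (Ain S n)) :|: Ref P (lab n) (Ain S n) (Lout S n)
    by rewrite -{1}Hfix /= ffunE.
  by rewrite HLin in_setU HR orbT.
by [].
Qed.
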